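(* Let $(\varphi_n)_{n\ge0}$ be vectors in $\mathbb{R}^d$, $r_0=1$, $r_n=1+\sum_{i=1}^n\|\varphi_i\|^2$, $A_n=\varphi_n\varphi_n^\top/r_n$, and define $\Phi(i,i)=I$, $\Phi(n+1,i)=(I-A_n)\Phi(n,i)$ for $n\ge i$. Assume $r_n\to\infty$, $r_n=O(r_{n-1})$, and that for some $\alpha<1$ $$\kappa\Big(\sum_{i=1}^n\varphi_i\varphi_i^\top\Big)=O\big((\log r_n)^\alpha\big),$$ i.e. there exist $M>0$ and $n_0$ such that for all $n\ge n_0$ the matrix $\sum_{i=1}^n\varphi_i\varphi_i^\top$ is nonsingular with condition number at most $M(\log r_n)^\alpha$. Then $\Phi(n,0)\to0$ as $n\to\infty$.
   Context: For a nonsingular matrix $A$, $\kappa(A)=\|A\|\,\|A^{-1}\|$ with $\|\cdot\|$ the spectral norm; $\log$ is the natural logarithm; $r_n=O(r_{n-1})$ means $r_n\le Cr_{n-1}$ for some constant $C$ and all $n\ge1$. *)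

(* Defs.v *)
From HB Require Import structures.
From mathcomp Require Import all_boot all_order all_algebra.
From mathcomp Require Import all_classical all_reals all_analysis.
Set Implicit Arguments. Unset Strict Implicit. Unset Printing Implicit Defensive.
Import Order.TTheory GRing.Theory Num.Theory.
Import numFieldNormedType.Exports.
Local Open Scope ring_scope.
Local Open Scope classical_set_scope.

Definition enorm (R : realType) (d : nat) (v : 'cV[R]_d) : R :=
  Num.sqrt (\sum_(k < d) v k ord0 ^+ 2).

Definition specnorm (R : realType) (m n : nat) (A : 'M[R]_(m, n)) : R :=
  sup [set enorm (A *m v) | v in [set v : 'cV[R]_n | enorm v = 1]].

Definition cond (R : realType) (d : nat) (A : 'M[R]_d) : R :=
  specnorm A * specnorm (invmx A).

Definition rseq (R : realType) (d : nat) (phi : nat -> 'cV[R]_d) (n : nat) : R :=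
  1 + \sum_(1 <= i < n.+1) enorm (phi i) ^+ 2.

Definition Amat (R : realType) (d : nat) (phi : nat -> 'cV[R]_d) (n : nat)
  : 'M[R]_d := (rseq phi n)^-1 *: (phi n *m (phi n)^T).

(* transition from time i over k steps: Phi(i+k, i) *)
Fixpoint trans (R : realType) (d : nat) (phi : nat -> 'cV[R]_d) (i k : nat)
  : 'M[R]_d :=
  match k with
  | 0 => 1%:M
  | k'.+1 => (1%:M - Amat phi (i + k')) *m trans phi i k'
  end.

Definition Phi (R : realType) (d : nat) (phi : nat -> 'cV[R]_d) (n i : nat)
  : 'M[R]_d := trans phi i (n - i).

Definition Smat (R : realType) (d : nat) (phi : nat -> 'cV[R]_d) (n : nat)
  : 'M[R]_d := \sum_(1 <= i < n.+1) (phi i *m (phi i)^T).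

(* Main.v *)
Require Import Defs.
From HB Require Import structures.
From mathcomp Require Import all_boot all_order all_algebra.
From mathcomp Require Import all_classical all_reals all_analysis.
Import Order.TTheory GRing.Theory Num.Theory.
Import numFieldNormedType.Exports.
Local Open Scope ring_scope.
Local Open Scope classical_set_scope.
From mathcomp Require Import ring lra.

Module Helpers.
Set Implicit Arguments. Unset Strict Implicit. Unset Printing Implicit Defensive.

Section CS.
Variable R : realType.

Lemma cs_seq (I : Type) (s : seq I) (u v : I -> R) :
  (\sum_(i <- s) u i * v i) ^+ 2 <=
  (\sum_(i <- s) u i ^+ 2) * (\sum_(i <- s) v i ^+ 2).
Proof.
set A := \sum_(i <- s) u i ^+ 2; set B := \sum_(i <- s) u i * v i;
set C := \sum_(i <- s) v i ^+ 2.
have H : \sum_(i <- s) \sum_(j <- s) (u i * v j - u j * v i) ^+ 2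
         = 2 * (A * C - B ^+ 2).
  have E : forall i j, (u i * v j - u j * v i) ^+ 2 =
     u i ^+ 2 * v j ^+ 2 + u j ^+ 2 * v i ^+ 2 - 2 * ((u i * v i) * (u j * v j)).
    by move=> i j; ring.
  under eq_bigr => i _ do under eq_bigr => j _ do rewrite E.
  under eq_bigr => i _ do rewrite sumrB big_split /=.
  rewrite sumrB big_split /=.
  have e1 : \sum_(i <- s) \sum_(j <- s) u i ^+ 2 * v j ^+ 2 = A * C.
    by rewrite /A mulr_suml; apply: eq_bigr => i _; rewrite mulr_sumr.
  have e2 : \sum_(i <- s) \sum_(j <- s) u j ^+ 2 * v i ^+ 2 = A * C.
    rewrite /A mulr_suml exchange_big /=; apply: eq_bigr => i _; rewrite mulr_sumr.
    by apply: eq_bigr => j _.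
  have e3 : \sum_(i <- s) \sum_(j <- s) 2 * (u i * v i * (u j * v j)) = 2 * B ^+ 2.
    rewrite expr2 /B mulr_suml mulr_sumr; apply: eq_bigr => i _.
    idtac.
    rewrite mulr_sumr mulr_sumr; apply: eq_bigr => j _; ring.
  rewrite e1 e2 e3; ring.
have : 0 <= \sum_(i <- s) \sum_(j <- s) (u i * v j - u j * v i) ^+ 2.
  by apply: sumr_ge0 => i _; apply: sumr_ge0 => j _; exact: sqr_ge0.
rewrite H; lra.
Qed.

End CS.

Section Dot.
Variables (R : realType) (d : nat).
Implicit Types u v w : 'cV[R]_d.

Definition dot u v : R := \sum_(k < d) u k ord0 * v k ord0.

Lemma dotC u v : dot u v = dot v u.
Proof. by apply: eq_bigr => k _; rewrite mulrC. Qed.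

Lemma dotDr u v w : dot u (v + w) = dot u v + dot u w.
Proof. by rewrite /dot -big_split; apply: eq_bigr => k _; rewrite mxE mulrDr. Qed.

Lemma dotNr u v : dot u (- v) = - dot u v.
Proof. by rewrite /dot -sumrN; apply: eq_bigr => k _; rewrite mxE mulrN. Qed.

Lemma dotBr u v w : dot u (v - w) = dot u v - dot u w.
Proof. by rewrite dotDr dotNr. Qed.

Lemma dotZr u v c : dot u (c *: v) = c * dot u v.
Proof. by rewrite /dot mulr_sumr; apply: eq_bigr => k _; rewrite mxE; ring. Qed.

Lemma dotDl u v w : dot (v + w) u = dot v u + dot w u.
Proof. by rewrite dotC dotDr !(dotC u). Qed.
Lemma dotBl u v w : dot (v - w) u = dot v u - dot w u.
Proof. by rewrite dotC dotBr !(dotC u). Qed.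
Lemma dotZl u v c : dot (c *: v) u = c * dot v u.
Proof. by rewrite dotC dotZr dotC. Qed.

Lemma dot_ge0 u : 0 <= dot u u.
Proof. by apply: sumr_ge0 => k _; rewrite -expr2 sqr_ge0. Qed.

Lemma enorm_sq u : enorm u ^+ 2 = dot u u.
Proof.
rewrite /enorm sqr_sqrtr; last by apply: sumr_ge0 => k _; exact: sqr_ge0.
by apply: eq_bigr => k _; rewrite expr2.
Qed.

Lemma enorm_ge0 u : 0 <= enorm u.
Proof. exact: sqrtr_ge0. Qed.

Lemma enormE u : enorm u = Num.sqrt (dot u u).
Proof. by rewrite -enorm_sq sqrtr_sqr ger0_norm // enorm_ge0. Qed.

Lemma cs_dot u v : dot u v ^+ 2 <= dot u u * dot v v.
Proof.
have := cs_seq (index_enum 'I_d) (fun k => u k ord0) (fun k => v k ord0).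
rewrite /dot.
have -> : \sum_(i <- index_enum 'I_d) u i ord0 ^+ 2 = \sum_(k < d) u k ord0 * u k ord0.
  by apply: eq_bigr => k _; rewrite expr2.
have -> : \sum_(i <- index_enum 'I_d) v i ord0 ^+ 2 = \sum_(k < d) v k ord0 * v k ord0.
  by apply: eq_bigr => k _; rewrite expr2.
by [].
Qed.

Lemma dot_le u v : dot u v <= enorm u * enorm v.
Proof.
have h := cs_dot u v.
have h0 : 0 <= enorm u * enorm v by rewrite mulr_ge0 // enorm_ge0.
case: (lerP (dot u v) 0) => [h1|h1]; first by apply: le_trans h1 h0.
rewrite -(ger0_norm (ltW h1)) -(ger0_norm h0).
rewrite -ler_sqr ?nnegrE ?normr_ge0 // !real_normK ?num_real //.
by rewrite exprMn !enorm_sq.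
Qed.

Lemma dot_abs_le u v : `|dot u v| <= enorm u * enorm v.
Proof.
case: (lerP 0 (dot u v)) => h; first by rewrite ger0_norm // dot_le.
rewrite ltr0_norm // -dotNr.
have := dot_le u (- v).
suff -> : enorm (- v) = enorm v by [].
by rewrite !enormE dotNr dotC dotNr opprK.
Qed.

Lemma enormD u v : enorm (u + v) <= enorm u + enorm v.
Proof.
rewrite -(ger0_norm (enorm_ge0 (u+v))) -(ger0_norm (addr_ge0 (enorm_ge0 u) (enorm_ge0 v))).
rewrite -ler_sqr ?nnegrE ?normr_ge0 // !real_normK ?num_real //.
rewrite enorm_sq dotDl !dotDr sqrrD !enorm_sq (dotC v u).
have := dot_le u v; lra.
Qed.

Lemma enormZ u c : enorm (c *: u) = `|c| * enorm u.
Proof.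
rewrite !enormE dotZl dotZr mulrA sqrtrM; last by rewrite -expr2 sqr_ge0.
by rewrite -expr2 sqrtr_sqr.
Qed.

Lemma enormN u : enorm (- u) = enorm u.
Proof. by rewrite !enormE dotNr dotC dotNr opprK. Qed.

Lemma enorm0 : enorm (0 : 'cV[R]_d) = 0.
Proof. by rewrite enormE /dot big1 ?sqrtr0 // => k _; rewrite mxE mul0r. Qed.

Lemma rank1_mul (p y : 'cV[R]_d) : (p *m p^T) *m y = dot p y *: p.
Proof.
apply/matrixP => i j; rewrite !mxE.
have -> : j = ord0 by apply: ord1.
under eq_bigr => k _ do rewrite mxE.
rewrite /dot mulr_suml; apply: eq_bigr => k _.
rewrite big_ord1 !mxE; ring.
Qed.

Lemma dot_mulmx_sum (I : Type) (s : seq I) (P : pred I) (F : I -> 'M[R]_d) u v :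
  dot u ((\sum_(i <- s | P i) F i) *m v) = \sum_(i <- s | P i) dot u (F i *m v).
Proof.
elim: s => [|a s IH]; first by rewrite !big_nil mul0mx /dot big1 // => k _; rewrite mxE mulr0.
rewrite !big_cons; case: (P a) => //.
by rewrite mulmxDl dotDr IH.
Qed.

End Dot.

Section Smat.
Variables (R : realType) (d : nat) (phi : nat -> 'cV[R]_d).

Lemma dot_Smat n u v :
  dot u (Smat phi n *m v) = \sum_(1 <= i < n.+1) dot (phi i) u * dot (phi i) v.
Proof.
rewrite /Smat dot_mulmx_sum; apply: eq_bigr => i _.
by rewrite rank1_mul dotZr mulrC dotC.
Qed.

End Smat.

Section Spec.
Variables (R : realType) (d : nat).

Definition frob (A : 'M[R]_d) : R := \sum_(i < d) \sum_(j < d) A i j ^+ 2.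

Lemma frob_bound (A : 'M[R]_d) (v : 'cV[R]_d) :
  dot (A *m v) (A *m v) <= frob A * dot v v.
Proof.
rewrite /dot /frob mulr_suml; apply: ler_sum => i _.
rewrite mxE -expr2.
have h := cs_seq (index_enum 'I_d) (fun j => A i j) (fun j => v j ord0).
apply: le_trans h _; apply: ler_wpM2l.
  by apply: sumr_ge0 => j _; exact: sqr_ge0.
by rewrite le_eqVlt; apply/orP; left; apply/eqP; apply: eq_bigr => j _; rewrite expr2.
Qed.

Lemma frob_ge0 (A : 'M[R]_d) : 0 <= frob A.
Proof. by apply: sumr_ge0 => i _; apply: sumr_ge0 => j _; exact: sqr_ge0. Qed.

Lemma enorm_mul_bound (A : 'M[R]_d) (v : 'cV[R]_d) :
  enorm (A *m v) <= Num.sqrt (frob A) * enorm v.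
Proof.
rewrite !enormE -sqrtrM ?frob_ge0 //; apply: ler_wsqrtr; exact: frob_bound.
Qed.

Lemma specnorm_has_ub (A : 'M[R]_d) :
  has_ubound [set enorm (A *m v) | v in [set v : 'cV[R]_d | enorm v = 1]].
Proof.
exists (Num.sqrt (frob A)) => x [v /= hv <-].
by have := enorm_mul_bound A v; rewrite hv mulr1.
Qed.

Lemma specnorm_ub (A : 'M[R]_d) (v : 'cV[R]_d) : enorm v = 1 ->
  enorm (A *m v) <= specnorm A.
Proof. move=> hv; apply: (ub_le_sup (specnorm_has_ub A)); by exists v. Qed.

Lemma enorm_eq0 (v : 'cV[R]_d) : enorm v = 0 -> v = 0.
Proof.
rewrite enormE => /eqP; rewrite sqrtr_eq0 => h.
have h0 : dot v v = 0 by apply/eqP; rewrite eq_le h dot_ge0.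
apply/matrixP => i j; rewrite mxE (ord1 j).
move: h0; rewrite /dot => /eqP; rewrite psumr_eq0; last by move=> k _; rewrite -expr2 sqr_ge0.
by move/allP/(_ i (mem_index_enum _)); rewrite mulf_eq0 orbb => /eqP.
Qed.

Lemma specnorm_le (A : 'M[R]_d) (v : 'cV[R]_d) :
  enorm (A *m v) <= specnorm A * enorm v.
Proof.
have [h0|hp] := eqVneq (enorm v) 0.
  by rewrite h0 (enorm_eq0 h0) mulmx0 enorm0 mulr0.
have hpos : 0 < enorm v by rewrite lt_neqAle eq_sym hp enorm_ge0.
have hu : enorm ((enorm v)^-1 *: v) = 1.
  by rewrite enormZ ger0_norm ?invr_ge0 ?enorm_ge0 // mulVf.
have := specnorm_ub A hu.
rewrite -scalemxAr enormZ ger0_norm ?invr_ge0 ?enorm_ge0 //.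
by rewrite ler_pdivrMl // mulrC.
Qed.

End Spec.

Section Exc.
Variables (R : realType) (d : nat) (phi : nat -> 'cV[R]_d).

Definition Q (m n : nat) (x : 'cV[R]_d) : R :=
  \sum_(m <= i < n) dot (phi i) x ^+ 2.

Lemma Q_ge0 m n x : 0 <= Q m n x.
Proof. by apply: sumr_ge0 => i _; exact: sqr_ge0. Qed.

Lemma excite n (x : 'cV[R]_d) (B : R) :
  Smat phi n \in unitmx -> cond (Smat phi n) <= B -> 0 < dot x x ->
  specnorm (Smat phi n) * dot x x <= B * Q 1 n.+1 x.
Proof.
move=> hu hc hx.
set S := Smat phi n.
set y := invmx S *m x.
have Sy : S *m y = x by rewrite /y mulKVmx.
have e1 := dot_Smat phi n x y; rewrite -/S Sy in e1.
have e2 : Q 1 n.+1 y = dot y x.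
  have e := dot_Smat phi n y y; rewrite -/S Sy in e.
  by rewrite e /Q; apply: eq_bigr => i _; rewrite expr2.
have h1 : dot x x ^+ 2 <= Q 1 n.+1 x * Q 1 n.+1 y.
  rewrite e1; apply: le_trans (cs_seq _ _ _) _.
  by rewrite /Q lexx.
have h2 : dot y x <= specnorm (invmx S) * dot x x.
  apply: le_trans (dot_le y x) _.
  rewrite -enorm_sq expr2 mulrA ler_wpM2r ?enorm_ge0 //.
  exact: specnorm_le.
have hQx := Q_ge0 1 n.+1 x.
have h3 : dot x x ^+ 2 <= Q 1 n.+1 x * (specnorm (invmx S) * dot x x).
  by apply: le_trans h1 _; rewrite e2 ler_wpM2l.
have hxn : 0 < enorm x by rewrite enormE sqrtr_gt0.
have hS : 0 <= specnorm S.
  have := specnorm_le S x; have := enorm_ge0 (S *m x).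
  move=> a b; have := le_trans a b; by rewrite pmulr_lge0.
have h4 : specnorm S * dot x x ^+ 2 <= Q 1 n.+1 x * B * dot x x.
  apply: le_trans (ler_wpM2l hS h3) _.
  have -> : specnorm S * (Q 1 n.+1 x * (specnorm (invmx S) * dot x x))
     = Q 1 n.+1 x * cond S * dot x x by rewrite /cond; ring.
  by rewrite ler_wpM2r ?dot_ge0 // ler_wpM2l.
rewrite expr2 mulrA in h4.
by move: h4; rewrite ler_pM2r // (mulrC B).
Qed.

End Exc.

Section R5.
Variables (R : realType) (d : nat) (phi : nat -> 'cV[R]_d).
Notation r := (rseq phi).

Lemma rS n : r n.+1 = r n + dot (phi n.+1) (phi n.+1).
Proof. by rewrite /rseq big_nat_recr //= enorm_sq addrA. Qed.

Lemma r0 : r 0 = 1.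
Proof. by rewrite /rseq big_geq // addr0. Qed.

Lemma r_ge1 n : 1 <= r n.
Proof.
by rewrite /rseq lerDl; apply: sumr_ge0 => i _; exact: sqr_ge0.
Qed.

Lemma r_gt0 n : 0 < r n.
Proof. exact: lt_le_trans ltr01 (r_ge1 n). Qed.

Lemma r_incr m n : (m <= n)%N -> r m <= r n.
Proof.
move/subnK => <-; elim: (n - m)%N => [|k IH]; first by rewrite add0n.
by rewrite addSn rS; apply: le_trans IH _; rewrite lerDl dot_ge0.
Qed.

Lemma rsub1 n : r n - 1 = \sum_(1 <= i < n.+1) dot (phi i) (phi i).
Proof. by rewrite /rseq addrC addKr; apply: eq_bigr => i _; rewrite enorm_sq. Qed.

Lemma dot_delta (k : 'I_d) (w : 'cV[R]_d) : dot (delta_mx k ord0) w = w k ord0.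
Proof.
rewrite /dot (bigD1 k) //= mxE !eqxx mul1r big1 ?addr0 // => j hj.
by rewrite mxE (negbTE hj) mul0r.
Qed.

Lemma enorm_delta (k : 'I_d) : enorm (delta_mx k ord0 : 'cV[R]_d) = 1.
Proof. by rewrite enormE dot_delta mxE !eqxx sqrtr1. Qed.

Lemma specnorm_S_lb n : r n - 1 <= d%:R * specnorm (Smat phi n).
Proof.
have h : forall k : 'I_d, \sum_(1 <= i < n.+1) phi i k ord0 ^+ 2 <= specnorm (Smat phi n).
  move=> k; set e := delta_mx k ord0 : 'cV[R]_d.
  apply: le_trans (specnorm_ub (Smat phi n) (enorm_delta k)).
  have := dot_le e (Smat phi n *m e); rewrite enorm_delta mul1r.
  apply: le_trans.
  rewrite dot_Smat; rewrite le_eqVlt; apply/orP; left; apply/eqP.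
  by apply: eq_bigr => i _; rewrite (dotC (phi i)) dot_delta expr2.
rewrite rsub1.
have -> : \sum_(1 <= i < n.+1) dot (phi i) (phi i)
   = \sum_(k < d) \sum_(1 <= i < n.+1) phi i k ord0 ^+ 2.
  rewrite exchange_big /=; apply: eq_bigr => i _.
  by rewrite /dot; apply: eq_bigr => k _; rewrite expr2.
rewrite -[d in d%:R]card_ord -sumr_const mulr_suml; apply: ler_sum => k _; rewrite mul1r; exact: h.
Qed.

Lemma Q_ub k x : Q phi 1 k.+1 x <= (r k - 1) * dot x x.
Proof.
rewrite rsub1 mulr_suml /Q; apply: ler_sum => i _.
exact: cs_dot.
Qed.

Lemma Q_split m n x : (1 <= m)%N -> (m <= n.+1)%N ->
  Q phi 1 n.+1 x = Q phi 1 m x + Q phi m n.+1 x.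
Proof. by move=> h1 h2; rewrite /Q -big_cat_nat. Qed.

End R5.

Section Dyn.
Variables (R : realType) (d : nat) (phi : nat -> 'cV[R]_d) (x0 : 'cV[R]_d).
Notation r := (rseq phi).

Definition xs n := trans phi 0 n *m x0.
Definition a n := dot (phi n) (xs n).
Definition V n := dot (xs n) (xs n).
Definition p n := dot (phi n) (phi n).
Definition c n := a n / r n.

Lemma xsS n : xs n.+1 = xs n - c n *: phi n.
Proof.
rewrite /xs /= add0n -mulmxA mulmxBl mul1mx; congr (_ - _).
by rewrite /Amat -!scalemxAl rank1_mul scalerA mulrC.
Qed.

Lemma p_le_r n : (1 <= n)%N -> p n <= r n.
Proof.
case: n => // n _; rewrite rS /p; have := r_ge1 phi n; lra.
Qed.

Lemma p_ge0 n : 0 <= p n.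
Proof. exact: dot_ge0. Qed.

Lemma a_cr n : a n = c n * r n.
Proof. by rewrite /c mulfVK // gt_eqF // r_gt0. Qed.

Lemma V_step n : (1 <= n)%N -> V n.+1 <= V n - a n ^+ 2 / r n.
Proof.
move=> hn.
have e : V n.+1 = V n - 2 * c n * a n + c n ^+ 2 * p n.
  rewrite /V xsS dotBl !dotBr !dotZl !dotZr (dotC (phi n) (xs n)) -/(a n) -/(p n).
  rewrite (dotC (xs n) (phi n)) -/(a n); ring.
have e2 : a n ^+ 2 / r n = c n ^+ 2 * r n.
  by rewrite a_cr; field; rewrite gt_eqF // r_gt0.
rewrite e e2 a_cr.
have := p_le_r hn; have := sqr_ge0 (c n).
nra.
Qed.

Lemma V_ge0 n : 0 <= V n.
Proof. exact: dot_ge0. Qed.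

Lemma V_mono m n : (1 <= m)%N -> (m <= n)%N -> V n <= V m.
Proof.
move=> hm /subnK <-; elim: (n - m)%N => [|k IH]; first by rewrite add0n.
rewrite addSn; apply: le_trans (V_step _) _; first by apply: leq_trans hm (leq_addl _ _).
apply: le_trans IH; rewrite lerBlDr lerDl divr_ge0 ?sqr_ge0 //.
exact: ltW (r_gt0 _ _).
Qed.

End Dyn.

Section Block.
Variables (R : realType) (d : nat) (phi : nat -> 'cV[R]_d) (x0 : 'cV[R]_d).
Notation r := (rseq phi).
Notation xs := (xs phi x0).
Notation a := (a phi x0).
Notation V := (V phi x0).
Notation c := (c phi x0).
Notation p := (p phi).

Definition g j := a j ^+ 2 / r j.
Definition Dsum m n := \sum_(m <= j < n) g j.
Definition Lsum m n := \sum_(m <= j < n) p j / r j.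

Lemma g_ge0 j : 0 <= g j.
Proof. by rewrite /g divr_ge0 ?sqr_ge0 // ltW // r_gt0. Qed.
Lemma pr_ge0 j : 0 <= p j / r j.
Proof. by rewrite divr_ge0 ?p_ge0 // ltW // r_gt0. Qed.

Lemma V_block m k : (1 <= m)%N -> V (m + k) <= V m - Dsum m (m + k).
Proof.
move=> hm; elim: k => [|k IH]; first by rewrite addn0 /Dsum big_geq // subr0.
rewrite addnS /Dsum big_nat_recr /=; last by rewrite leq_addr.
apply: le_trans (V_step _ _ _) _; first by apply: leq_trans hm (leq_addr _ _).
rewrite -/(g _); move: IH; rewrite /Dsum; lra.
Qed.

Lemma dist_bound m k : enorm (xs (m + k) - xs m) <= \sum_(m <= j < m + k) `|c j| * enorm (phi j).
Proof.
elim: k => [|k IH]; first by rewrite addn0 subrr enorm0 big_geq.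
rewrite addnS big_nat_recr /=; last by rewrite leq_addr.
rewrite xsS.
have -> : xs (m + k) - c (m + k) *: phi (m + k) - xs m = (xs (m + k) - xs m) + (- (c (m+k) *: phi (m+k))).
  by rewrite addrAC.
apply: le_trans (enormD _ _) _; rewrite enormN enormZ.
by rewrite lerD2r.
Qed.

Lemma sum_cs m i : (\sum_(m <= j < i) `|c j| * enorm (phi j)) ^+ 2 <=
   Dsum m i * Lsum m i.
Proof.
have h := cs_seq (index_iota m i) (fun j => `|a j| / Num.sqrt (r j))
                 (fun j => enorm (phi j) / Num.sqrt (r j)).
have E1 : forall j, `|a j| / Num.sqrt (r j) * (enorm (phi j) / Num.sqrt (r j))
     = `|c j| * enorm (phi j).
  move=> j; have hr := r_gt0 phi j.
  have hs : 0 < Num.sqrt (r j) by rewrite sqrtr_gt0.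
  have hri : 0 < (r j)^-1 by rewrite invr_gt0.
  rewrite /c normrM (gtr0_norm hri).
  have : Num.sqrt (r j) * Num.sqrt (r j) = r j by rewrite -expr2 sqr_sqrtr // ltW.
  move=> e.
  transitivity (`|a j| * enorm (phi j) / (Num.sqrt (r j) * Num.sqrt (r j))).
    by field; rewrite gt_eqF.
  by rewrite e mulrAC.
have E2 : forall j, (`|a j| / Num.sqrt (r j)) ^+ 2 = g j.
  move=> j; have hr := r_gt0 phi j.
  rewrite expr_div_n sqr_sqrtr ?ltW // /g; by rewrite real_normK ?num_real.
have E3 : forall j, (enorm (phi j) / Num.sqrt (r j)) ^+ 2 = p j / r j.
  move=> j; have hr := r_gt0 phi j.
  by rewrite expr_div_n enorm_sq sqr_sqrtr ?ltW.
move: h; under eq_bigr => j _ do rewrite E1.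
under [X in _ <= X * _]eq_bigr => j _ do rewrite E2.
by under [X in _ <= _ * X]eq_bigr => j _ do rewrite E3.
Qed.



Lemma sum_sub (f : nat -> R) a0 b0 c0 e0 : (forall j, 0 <= f j) ->
  (a0 <= b0)%N -> (b0 <= c0)%N -> (c0 <= e0)%N ->
  \sum_(b0 <= j < c0) f j <= \sum_(a0 <= j < e0) f j.
Proof.
move=> f0 h1 h2 h3.
rewrite (@big_cat_nat _ _ _ b0 a0 e0) //=; last by apply: leq_trans h3.
rewrite (@big_cat_nat _ _ _ c0 b0 e0) //=.
have z1 : 0 <= \sum_(a0 <= j < b0) f j by apply: sumr_ge0.
have z2 : 0 <= \sum_(c0 <= j < e0) f j by apply: sumr_ge0.
lra.
Qed.

Lemma Dsum_ge0 m n : 0 <= Dsum m n.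
Proof. by apply: sumr_ge0 => j _; apply: g_ge0. Qed.
Lemma Lsum_ge0 m n : 0 <= Lsum m n.
Proof. by apply: sumr_ge0 => j _; apply: pr_ge0. Qed.

Lemma dist_sq m i n : (m <= i)%N -> (i <= n)%N ->
  dot (xs i - xs m) (xs i - xs m) <= Dsum m n * Lsum m n.
Proof.
move=> hmi hin.
have h1 := dist_bound m (i - m).
rewrite subnKC // in h1.
have h2 := sum_cs m i.
have h0 := enorm_ge0 (xs i - xs m).
rewrite -enorm_sq.
have h3 : enorm (xs i - xs m) ^+ 2 <= Dsum m i * Lsum m i.
  apply: le_trans h2; move: h0 h1; set s := \sum_(_ <= _ < _) _; nra.
apply: le_trans h3 _; apply: ler_pM; rewrite ?Dsum_ge0 ?Lsum_ge0 //.
  by apply: sum_sub => //; apply: g_ge0.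
by apply: sum_sub => //; apply: pr_ge0.
Qed.

Lemma Q_block m n : (1 <= m)%N -> (m <= n.+1)%N ->
  Q phi m n.+1 (xs m) <= 2 * r n * Dsum m n.+1 * (1 + Lsum m n.+1).
Proof.
move=> h1 h2.
set D := Dsum m n.+1; set L := Lsum m n.+1.
have hD := Dsum_ge0 m n.+1; have hL := Lsum_ge0 m n.+1.
have term : forall i, (m <= i < n.+1)%N ->
    dot (phi i) (xs m) ^+ 2 <= 2 * r n * g i + 2 * (D * L) * p i.
  move=> i /andP [hmi hin].
  have e : dot (phi i) (xs m) = a i - dot (phi i) (xs i - xs m) by rewrite dotBr /a; ring.
  have ht : dot (phi i) (xs i - xs m) ^+ 2 <= p i * (D * L).
    apply: le_trans (cs_dot _ _) _; apply: ler_wpM2l; first exact: p_ge0.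
    exact: dist_sq hmi (ltnW hin).
  have ha : a i ^+ 2 <= r n * g i.
    have hr := r_gt0 phi i.
    have -> : a i ^+ 2 = r i * g i by rewrite /g; field; rewrite gt_eqF.
    by apply: ler_wpM2r; [apply: g_ge0 | apply: r_incr].
  rewrite e; move: ht ha.
  set A := a i; set T := dot _ _; set P := p i * (D * L).
  have -> : 2 * (D * L) * p i = 2 * P by rewrite /P; ring.
  have := sqr_ge0 (A + T).
  set G := r n * g i.
  have -> : 2 * r n * g i = 2 * G by rewrite /G; ring.
  move=> k0 k1 k2.
  have -> : (A - T) ^+ 2 = 2 * A ^+ 2 + 2 * T ^+ 2 - (A + T) ^+ 2 by ring.
  lra.
rewrite /Q; apply: le_trans (ler_sum_nat term) _.
rewrite big_split /= -!mulr_sumr -/(Dsum m n.+1) -/D.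
have hp : \sum_(m <= i < n.+1) p i <= r n.
  apply: le_trans (@sum_sub (p) 1 m n.+1 n.+1 (fun j => p_ge0 phi j) h1 h2 (leqnn _)) _.
  have -> : \sum_(1 <= j < n.+1) p j = r n - 1 by rewrite rsub1.
  lra.
have := ler_wpM2l (_ : 0 <= 2 * (D * L)) hp.
have hr := r_gt0 phi n.
move=> /(_ ltac:(by rewrite !mulr_ge0)).
nra.
Qed.

Lemma L_log m k : Lsum m.+1 (m + k).+1 <= ln (r (m + k)) - ln (r m).
Proof.
elim: k => [|k IH]; first by rewrite addn0 /Lsum big_geq // subrr.
rewrite /Lsum addnS big_nat_recr /=; last by rewrite ltnS leq_addr.
have step : p (m + k).+1 / r (m + k).+1 <= ln (r (m + k).+1) - ln (r (m + k)).
  set i := (m + k)%N.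
  have hr0 := r_gt0 phi i; have hr1 := r_gt0 phi i.+1.
  have e : r i / r i.+1 = 1 + (- (p i.+1 / r i.+1)).
    by rewrite (rS phi i) -/(p _); field; rewrite gt_eqF // -rS.
  have hx : -1 < - (p i.+1 / r i.+1).
    rewrite ltrN2 ltr_pdivrMr // mul1r (rS phi i) -/(p _); lra.
  have := le_ln1Dx hx; rewrite -e ln_div ?posrE //; lra.
move: IH; rewrite /Lsum; lra.
Qed.

End Block.

Section Gain.
Variables (R : realType) (d : nat) (phi : nat -> 'cV[R]_d) (x0 : 'cV[R]_d).
Notation r := (rseq phi).
Notation xs := (xs phi x0).
Notation V := (V phi x0).

Lemma block_gain (m' n : nat) (B : R) :
  (m' < n)%N -> (1 <= m')%N ->
  Smat phi n \in unitmx -> cond (Smat phi n) <= B -> 0 < B ->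
  0 < V m'.+1 -> 2 <= r n -> 4 * d%:R * B * r m' <= r n ->
  V m'.+1 <= 8 * d%:R * B * (1 + (ln (r n) - ln (r m'))) * Dsum phi x0 m'.+1 n.+1.
Proof.
move=> hmn hm1 hu hc hB hV hr2 hK.
set m := m'.+1.
set D := Dsum phi x0 m n.+1.
have hD : 0 <= D := Dsum_ge0 _ _ _ _.
have hex : specnorm (Smat phi n) * V m <= B * Q phi 1 n.+1 (xs m) := excite hu hc hV.
have hlb := specnorm_S_lb phi n.
have hsp : Q phi 1 n.+1 (xs m) = Q phi 1 m (xs m) + Q phi m n.+1 (xs m).
  exact: (Q_split phi (xs m) (ltn0Sn m') (leqW hmn)).
have hq1 : Q phi 1 m (xs m) <= (r m' - 1) * V m := Q_ub phi m' (xs m).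
have hq2 := Q_block phi x0 (ltn0Sn m') (leqW hmn).
have hL : Lsum phi m n.+1 <= ln (r n) - ln (r m').
  have := L_log phi m' (n - m'); rewrite subnKC //; exact: ltnW.
have hLg := Lsum_ge0 phi m n.+1.
rewrite -/m -/D in hq2.
set S := specnorm (Smat phi n) in hex hlb.
set Vm := V m in hex hq1 hV *.
set Q1 := Q phi 1 n.+1 (xs m) in hex hsp.
set Qa := Q phi 1 m (xs m) in hsp hq1.
set Qb := Q phi m n.+1 (xs m) in hsp hq2.
set L := Lsum phi m n.+1 in hq2 hL hLg.
set lg := ln (r n) - ln (r m') in hL *.
have hr1 := r_ge1 phi m'.
set rn := r n in hr2 hK hlb hq2 *.
set rm := r m' in hK hq1 hr1 *.
set dd := d%:R in hK hlb *.
have hdd : 0 <= dd by rewrite /dd ler0n.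
have h1 : rn * Vm <= 2 * dd * S * Vm.
  have : rn <= 2 * (dd * S) by lra.
  move=> h; have := ler_wpM2r (ltW hV) h; lra.
have h2 : dd * (S * Vm) <= dd * (B * Q1) by apply: ler_wpM2l.
have h3 : dd * B * Qa <= dd * B * (rm * Vm).
  apply: ler_wpM2l; first by rewrite mulr_ge0 // ltW.
  apply: le_trans hq1 _; apply: ler_wpM2r; [exact: ltW | lra].
have h4 : dd * B * Qb <= dd * B * (2 * rn * D * (1 + L)).
  by apply: ler_wpM2l; first by rewrite mulr_ge0 // ltW.
have h5 : 4 * dd * B * rm * Vm <= rn * Vm.
  by apply: ler_wpM2r; [exact: ltW | exact: hK].
have h6 : dd * B * (2 * rn * D * (1 + L)) <= dd * B * (2 * rn * D * (1 + lg)).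
  apply: ler_wpM2l; first by rewrite mulr_ge0 // ltW.
  apply: ler_wpM2l; first by rewrite !mulr_ge0 // ltW // (lt_le_trans _ hr2).
  lra.
(* combine: rn Vm <= 2 dd B Q1 = 2 dd B Qa + 2 dd B Qb *)
have h7 : rn * Vm <= 8 * dd * B * (1 + lg) * D * rn.
  have e1 : 2 * dd * S * Vm = 2 * (dd * (S * Vm)) by ring.
  have e2 : dd * (B * Q1) = dd * B * Qa + dd * B * Qb by rewrite hsp; ring.
  have e3 : dd * B * (rm * Vm) = (4 * dd * B * rm * Vm) / 4 by field.
  have e4 : dd * B * (2 * rn * D * (1 + lg)) = (8 * dd * B * (1 + lg) * D * rn) / 4 by field.
  move: h1 h2 h3 h4 h5 h6; rewrite e1 e2 e3 e4.
  set X := 4 * dd * B * rm * Vm; set Y := 8 * dd * B * (1 + lg) * D * rn.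
  set Z := dd * (S * Vm); set W := rn * Vm. move=> *. lra.
have hrn : 0 < rn by apply: lt_le_trans hr2.
rewrite -(ler_pM2r hrn); move: h7.
by rewrite (mulrC rn Vm).
Qed.

End Gain.

Section Params.
Variable R : realType.

Lemma params (d : nat) (M C a V1 eps beta : R) :
  0 < M -> 1 <= C -> 0 <= a -> 0 <= V1 -> 0 < eps -> 0 <= beta -> beta < 1 ->
  exists s T : nat,
    let t := (T%:R : R) in let N := (T ^ s.+2)%N in let L := a + N%:R * t in
    [/\ 1 <= t, C <= expR t, 4 * d%:R * M * C * L `^ beta <= expR t &
        8 * d%:R * M * L `^ beta * (1 + ln C + t) * V1 < N%:R * eps].
Proof.
move=> hM hC ha hV he hb0 hb1.
have hlnC : 0 <= ln C by apply: ln_ge0.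
have hdd : 0 <= (d%:R : R) by apply: ler0n.
pose s := Num.Def.archi_bound (4 * beta / (1 - beta)).
have hs : 4 * beta / (1 - beta) < s%:R by apply: archi_boundP; rewrite divr_ge0 //; lra.
have hs' : (s.+4%:R : R) * beta <= s%:R.
  have h1b : 0 < 1 - beta by lra.
  rewrite ltr_pdivrMr // in hs.
  have -> : (s.+4%:R : R) = s%:R + 4 by rewrite -addn4 natrD.
  nra.
pose F := (s.+1)`!%:R * (4 * d%:R * M * C + C) : R.
have hK0 : 0 <= 4 * d%:R * M * C.
  by apply: mulr_ge0; [apply: mulr_ge0; [apply: mulr_ge0 => //; lra | lra] | lra].
have hF : 0 <= F by rewrite /F; apply: mulr_ge0 => //; lra.
pose X := 1 + a + (1 + ln C) + F + 16 * d%:R * M * V1 / eps.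
have hX0 : 0 <= 16 * d%:R * M * V1 / eps.
  apply: divr_ge0; last lra.
  by apply: mulr_ge0 => //; apply: mulr_ge0; [apply: mulr_ge0 => //; lra | lra].
have hX : 0 <= X by rewrite /X; lra.
pose T := Num.Def.archi_bound X.
have hT : X < T%:R by apply: archi_boundP.
exists s, T => t N L.
rewrite /X in hT.
have ht1 : 1 <= t by rewrite /t; lra.
have ht0 : 0 < t by lra.
have hta : a + 1 <= t by rewrite /t; lra.
have htC : 1 + ln C <= t by rewrite /t; lra.
have htF : F <= t by rewrite /t; lra.
have hte : 16 * d%:R * M * V1 / eps < t by rewrite /t; lra.
have htk : forall k, 1 <= t ^+ k by move=> k; apply: exprn_ege1.
have hN : (N%:R : R) = t ^+ s.+2 by rewrite /N natrX.
have hL0 : 0 <= L by rewrite /L hN addr_ge0 // mulr_ge0 // ?exprn_ge0 // ltW.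
have hLt : L <= t ^+ s.+4.
  rewrite /L hN mulrC -exprS (exprS t s.+3).
  have := htk s.+3; set u := t ^+ s.+3; nra.
have hLb : L `^ beta <= t ^+ s.
  have hn1 : L \in Num.nneg by rewrite nnegrE.
  have hn2 : t ^+ s.+4 \in Num.nneg by rewrite nnegrE exprn_ge0 // ltW.
  apply: le_trans (ge0_ler_powR hb0 hn1 hn2 hLt) _.
  rewrite -(powR_mulrn s.+4 (ltW ht0)) -powRrM -(powR_mulrn s (ltW ht0)).
  exact: ler_powR.
have hLb0 : 0 <= L `^ beta by apply: powR_ge0.
have hexp : (4 * d%:R * M * C + C) * t ^+ s <= expR t.
  apply: le_trans (expR_ge1Dxn s (ltW ht0)).
  have hf : (0 : R) < (s.+1)`!%:R by rewrite ltr0n fact_gt0.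
  have : F * t ^+ s <= t ^+ s.+1.
    by rewrite exprS mulrC [X in _ <= X]mulrC ler_wpM2l // ?exprn_ge0 // ltW.
  rewrite /F => h.
  have h2 : (4 * d%:R * M * C + C) * t ^+ s <= t ^+ s.+1 / (s.+1)`!%:R.
    rewrite ler_pdivlMr //.
    have -> : (4 * d%:R * M * C + C) * t ^+ s * (s.+1)`!%:R
       = (s.+1)`!%:R * (4 * d%:R * M * C + C) * t ^+ s by ring.
    exact: h.
  lra.
have hts := htk s.
split => //.
- have : C <= C * t ^+ s by rewrite ler_peMr //; lra.
  have : 0 <= 4 * d%:R * M * C * t ^+ s by rewrite mulr_ge0 //; lra.
  move: hexp; lra.
- apply: le_trans hexp; apply: le_trans (_ : 4 * d%:R * M * C * t ^+ s <= _).
    by apply: ler_wpM2l.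
  have : 0 <= C * t ^+ s by rewrite mulr_ge0 //; lra.
  lra.
- rewrite hN.
  have hG : 8 * d%:R * M * L `^ beta * (1 + ln C + t) * V1
             <= 16 * d%:R * M * V1 * t ^+ s.+1.
    have h8 : 0 <= 8 * d%:R * M by rewrite !mulr_ge0 // ltW.
    have e : 16 * d%:R * M * V1 * t ^+ s.+1 = (8 * d%:R * M) * t ^+ s * (2 * t) * V1.
      by rewrite exprS; ring.
    rewrite e; apply: ler_wpM2r => //; apply: ler_pM; rewrite ?mulr_ge0 //; try lra.
    by apply: ler_wpM2l.
  apply: le_lt_trans hG _.
  have h16 : 16 * d%:R * M * V1 < eps * t.
    by move: hte; rewrite ltr_pdivrMr // (mulrC eps).
  have hp : 0 < t ^+ s.+1 by rewrite exprn_gt0.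
  have := ltr_pM2r hp; move=> /(_ (16 * d%:R * M * V1) (eps * t)); rewrite h16 => /esym h.
  have -> : t ^+ s.+2 * eps = eps * t * t ^+ s.+1 by rewrite exprS; ring.
  by rewrite -h.
Qed.
End Params.

Section Core.
Variables (R : realType) (d : nat) (phi : nat -> 'cV[R]_d) (x0 : 'cV[R]_d).
Notation r := (rseq phi).
Notation V := (V phi x0).

Lemma core (eps C M beta alpha : R) (n0 : nat) :
  (0 < d)%N -> 0 < eps ->
  (forall A, exists N, forall n, (N <= n)%N -> A <= r n) ->
  (forall n, (1 <= n)%N -> r n <= C * r n.-1) ->
  0 <= beta -> beta < 1 -> alpha <= beta -> 0 < M ->
  (forall n, (n0 <= n)%N -> Smat phi n \in unitmx /\ cond (Smat phi n) <= M * ln (r n) `^ alpha) ->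
  exists n, (1 <= n)%N /\ V n <= eps.
Proof.
move=> hd he Hr HC hb0 hb1 hab hM Hc.
case: (pselect (exists n, (1 <= n)%N /\ V n <= eps)) => // hno.
have hV : forall n, (1 <= n)%N -> eps < V n.
  move=> n hn; rewrite ltNge; apply/negP => h; apply: hno; by exists n.
have hC1 : 1 <= C.
  have := HC 1%N (leqnn 1); rewrite /= r0 mulr1; apply: le_trans; exact: r_ge1.
have hC0 : 0 < C by lra.
pose R0 := r n0 + expR 1 + 2.
have he1 : 0 < expR (1:R) := expR_gt0 1.
have hR0 : r n0 < R0 by rewrite /R0; lra.
have hR02 : 2 <= R0 by rewrite /R0; have := r_ge1 phi n0; lra.
have hR0e : expR 1 <= R0 by rewrite /R0; have := r_ge1 phi n0; lra.
have hR00 : 0 < R0 by lra.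
pose a := ln (C * R0).
have ha : 0 <= a by rewrite /a ln_ge0 //; nra.
have hV10 : 0 <= V 1%N by apply: V_ge0.
have [s [T [ht1 hKC hKB hfin]]] := params d hM hC1 ha hV10 he hb0 hb1.
set t := (T%:R : R) in ht1 hKC hKB hfin.
set N := (T ^ s.+2)%N in hfin.
set L := a + N%:R * t in hKB hfin.
set K := expR t in hKC hKB.
have hK1 : 1 <= K by rewrite /K -expR0 ler_expR; lra.
pose Tk k := R0 * K ^+ k.
have hTk : forall k, R0 <= Tk k.
  move=> k; apply: ler_peMr; [lra | exact: exprn_ege1].
have hTkS : forall k, Tk k.+1 = K * Tk k by move=> k; rewrite /Tk exprS; ring.
have first : forall k, exists m, [/\ (1 <= m)%N, (n0 < m)%N, Tk k <= r m & r m.-1 < Tk k].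
  move=> k.
  have ex : exists m, Tk k <= r m.
    by have [N0 HN0] := Hr (Tk k); exists N0; apply: HN0.
  case: (ex_minnP ex) => m hm hmin.
  have hn0m : (n0 < m)%N.
    rewrite ltnNge; apply/negP => hle.
    have := r_incr phi hle; have := hTk k; lra.
  have hm1 : (1 <= m)%N by apply: leq_ltn_trans hn0m.
  exists m; split => //.
  rewrite ltNge; apply/negP => /hmin; case: m hm hmin hn0m hm1 => // m' _ _ _ _ /=.
  by rewrite ltnn.
have [mk Hmk] := choice first.
pose B := M * L `^ beta.
have hL1 : forall n, (n0 <= n)%N -> r n <= C * Tk N -> 1 <= ln (r n) -> ln (r n) <= L.
  move=> n _ hn _.
  have hrn := r_gt0 phi n.
  have hTN : 0 < Tk N by apply: lt_le_trans hR00 (hTk N).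
  apply: le_trans (_ : ln (C * Tk N) <= L).
    by rewrite ler_ln ?posrE // mulr_gt0.
  rewrite /Tk /L /a mulrA lnM ?posrE ?mulr_gt0 ?exprn_gt0 //; last by lra.
  rewrite lnXn; last by lra.
  by rewrite /K expRK mulr_natl.
have hB0 : 0 < B.
  apply: mulr_gt0 => //; apply: powR_gt0.
  have hT1 : (1 <= T)%N by rewrite -(ler_nat R).
  have hN1 : (1 : R) <= N%:R by rewrite ler1n /N expn_gt0 hT1.
  have := ler_pM ler01 ler01 hN1 ht1; rewrite mulr1 => ?.
  rewrite /L; lra.
pose G := 8 * d%:R * B * (1 + ln C + t).
have hdd : (1 : R) <= d%:R by rewrite ler1n.
have hlnC : 0 <= ln C by apply: ln_ge0.
have hG0 : 0 < G by rewrite /G; apply: mulr_gt0; [apply: mulr_gt0 => //; lra | lra].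
have claim : forall k, (k <= N)%N -> V (mk k).+1 + k%:R * (eps / G) <= V 1%N.
  elim => [_|k IH hk].
    rewrite mul0r addr0; apply: V_mono => //.
  have hkN : (k <= N)%N by apply: ltnW.
  have := IH hkN.
  case: (Hmk k) => hm1 hmn0 hmT hmT'.
  case: (Hmk k.+1) => hn1 hnn0 hnT hnT'.
  set m' := mk k in hm1 hmn0 hmT hmT' *.
  set n := mk k.+1 in hn1 hnn0 hnT hnT' *.
  have hTk0 : 0 < Tk k by apply: lt_le_trans hR00 (hTk k).
  have hrm' : r m' < C * Tk k.
    apply: le_lt_trans (HC m' hm1) _; rewrite ltr_pM2l //.
  have hrn : r n < C * Tk k.+1.
    apply: le_lt_trans (HC n hn1) _; rewrite ltr_pM2l //.
  have hmn : (m' < n)%N.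
    rewrite ltnNge; apply/negP => hle.
    have := r_incr phi hle; rewrite hTkS in hnT.
    have : C * Tk k <= K * Tk k by rewrite ler_pM2r.
    lra.
  have hTkN : Tk k.+1 <= Tk N.
    rewrite /Tk ler_pM2l //; exact: ler_weXn2l.
  have hrnN : r n <= C * Tk N.
    apply: le_trans (ltW hrn) _; by rewrite ler_pM2l.
  have hlnr1 : 1 <= ln (r n).
    rewrite -(expRK 1) ler_ln ?posrE ?expR_gt0 ?r_gt0 //.
    have := hTk k.+1; lra.
  have hlnL := hL1 n (ltnW hnn0) hrnN hlnr1.
  have [hu hc] := Hc n (ltnW hnn0).
  have hcB : cond (Smat phi n) <= B.
    apply: le_trans hc _; rewrite /B ler_pM2l //.
    apply: le_trans (_ : ln (r n) `^ beta <= _).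
      exact: ler_powR.
    apply: ge0_ler_powR => //; rewrite nnegrE; lra.
  have hVm : 0 < V m'.+1 by apply: lt_trans he (hV _ _).
  have hr2 : 2 <= r n by have := hTk k.+1; lra.
  have h4 : 4 * d%:R * B * r m' <= r n.
    have h4B : 0 <= 4 * d%:R * B by apply: mulr_ge0; [lra | exact: ltW].
    apply: le_trans (_ : 4 * d%:R * B * (C * Tk k) <= _).
      by apply: ler_wpM2l => //; exact: ltW.
    apply: le_trans (_ : K * Tk k <= _); last by rewrite -hTkS.
    rewrite mulrA; apply: ler_wpM2r; first exact: ltW.
    by move: hKB; rewrite /B; have -> : 4 * d%:R * (M * L `^ beta) * C = 4 * d%:R * M * C * L `^ beta by ring.
  have hg := block_gain (x0:=x0) hmn hm1 hu hcB hB0 hVm hr2 h4.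
  have hdiff : ln (r n) - ln (r m') <= ln C + t.
    have h1 : ln (r n) <= ln C + t + ln (Tk k).
      apply: le_trans (_ : ln (C * Tk k.+1) <= _).
        rewrite ler_ln ?posrE ?r_gt0 //; last by apply: mulr_gt0 => //; apply: lt_le_trans hR00 (hTk _).
        exact: ltW.
      have hKp : 0 < K by rewrite /K expR_gt0.
      have hTp : 0 < Tk k := hTk0.
      have lnM' : forall x y : R, 0 < x -> 0 < y -> ln (x * y) = ln x + ln y.
        by move=> x y hx hy; apply: lnM.
      have hKT : 0 < K * Tk k by apply: mulr_gt0.
      rewrite hTkS (lnM' C (K * Tk k) hC0 hKT) (lnM' K (Tk k) hKp hTp) /K expRK.
      lra.
    have h2 : ln (Tk k) <= ln (r m') by rewrite ler_ln ?posrE ?r_gt0.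
    lra.
  set D := Dsum phi x0 m'.+1 n.+1 in hg.
  have hD : 0 <= D := Dsum_ge0 _ _ _ _.
  have hGD : V m'.+1 <= G * D.
    apply: le_trans hg _; rewrite /G; apply: ler_wpM2r => //.
    apply: ler_wpM2l; first by apply: mulr_ge0; [lra | exact: ltW].
    lra.
  have heD : eps / G <= D.
    rewrite ler_pdivrMr // mulrC; apply: le_trans hGD; apply: ltW; by apply: hV.
  have hvb := V_block phi x0 (m:=m'.+1) (n - m') (ltn0Sn m').
  rewrite addSn subnKC in hvb; last exact: ltnW.
  rewrite -/D in hvb.
  rewrite -[k.+1]addn1 natrD mulrDl mul1r.
  move=> IHk; lra.
have := claim N (leqnn N).
have hVN := V_ge0 phi x0 (mk N).+1.
have hfin' : G * V 1%N < N%:R * eps.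
  by move: hfin; rewrite /G /B; have -> : 8 * d%:R * (M * L `^ beta) * (1 + ln C + t) = 8 * d%:R * M * L `^ beta * (1 + ln C + t) by ring.
have : N%:R * (eps / G) * G = N%:R * eps by field; rewrite gt_eqF.
move=> e h.
have : N%:R * (eps / G) <= V 1%N by lra.
rewrite -(ler_pM2r hG0) e mulrC.
lra.
Qed.
End Core.

End Helpers.
Import Helpers.


Lemma mul_delta_entry (R : realType) d (A : 'M[R]_d) (i j : 'I_d) :
  (A *m (delta_mx j (@ord0 0) : 'cV[R]_d)) i ord0 = A i j.
Proof.
rewrite mxE (bigD1 j) //= mxE !eqxx mulr1 big1 ?addr0 // => k hk.
by rewrite mxE (negbTE hk) mulr0.
Qed.

Theorem mainTheorem5 (R : realType) (d : nat) (phi : nat -> 'cV[R]_d)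
  (alpha : R) :
  rseq phi n @[n --> \oo] --> +oo ->
  (exists C : R, forall n : nat, (1 <= n)%N -> rseq phi n <= C * rseq phi n.-1) ->
  alpha < 1 ->
  (exists (M : R) (n0 : nat), 0 < M /\
     forall n : nat, (n0 <= n)%N ->
       Smat phi n \in unitmx /\
       cond (Smat phi n) <= M * (ln (rseq phi n)) `^ alpha) ->
  Phi phi n 0 @[n --> \oo] --> (0 : 'M[R]_d).
Proof.
move=> Hr [C HC] hal [M [n0 [hM Hc]]].
have Hr' : forall A, exists N, forall n, (N <= n)%N -> A <= rseq phi n.
  move=> A; have := (cvgryPge _).1 Hr A.
  move=> [N _ HN]; exists N => n hn; exact: HN.
pose beta := Num.max alpha 0.
have hb0 : 0 <= beta by rewrite le_max lexx orbT.
have hb1 : beta < 1 by rewrite gt_max hal ltr01.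
have hab : alpha <= beta by rewrite le_max lexx.
apply/cvgr0Pnorm_le => e he.
have Hj : forall j : 'I_d, exists N, forall n, (N <= n)%N ->
    V phi (delta_mx j ord0) n <= e ^+ 2.
  move=> j.
  have hd : (0 < d)%N by apply: leq_ltn_trans (ltn_ord j).
  have he2 : 0 < e ^+ 2 by rewrite exprn_gt0.
  have [n1 [hn1 hVn]] := core (phi:=phi) (delta_mx j ord0) hd he2 Hr' HC hb0 hb1 hab hM Hc.
  exists n1 => n hn; apply: le_trans hVn; exact: V_mono.
have [f Hf] := choice Hj.
exists (\max_(j < d) f j) => // n /= hn.
have -> : `|Phi phi n 0| = mx_norm (Phi phi n 0) by [].
rewrite mx_normrE; apply: bigmax_le; first exact: ltW.
move=> [i j] _ /=.
have hV : V phi (delta_mx j ord0) n <= e ^+ 2.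
  apply: Hf; apply: leq_trans hn; exact: leq_bigmax.
have e1 : Phi phi n 0 i j = dot (delta_mx i ord0) (xs phi (delta_mx j ord0) n).
  by rewrite dot_delta /xs /Phi subn0 mul_delta_entry.
rewrite e1; apply: le_trans (dot_abs_le _ _) _.
rewrite enorm_delta mul1r enormE.
rewrite -(ger0_norm (ltW he)) -sqrtr_sqr; apply: ler_wsqrtr.
exact: hV.
Qed.
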